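(* Let $A\in\mathbb{R}^{n\times d}$ have $i$-th row $y^{(i)}\mathbf{x}^{(i)\top}$ for data $\mathbf{x}^{(i)}\in\mathbb{R}^d$, $y^{(i)}\in\{-1,1\}$, and let $\alpha_t=t$. Consider: (Accelerated Perceptron.) $\mathbf{q}_0=\tfrac{\mathbf{1}}{n}$, $\mathbf{v}_0=\mathbf{0}$, $\mathbf{g}_0=\mathbf{0}$, $\theta_{t-1}=\frac{t}{2(t+1)}$, $\beta_t=\frac{t}{t+1}$; for $t=1,\dots,T$: $\mathbf{v}_t=\mathbf{v}_{t-1}-\theta_{t-1}(\mathbf{g}_{t-1}-A^{\top}\mathbf{q}_{t-1})$; $q_{t,i}=\frac{\exp(-y^{(i)}\mathbf{v}_t^{\top}\mathbf{x}^{(i)})}{\sum_{j=1}^n\exp(-y^{(j)}\mathbf{v}_t^{\top}\mathbf{x}^{(j)})}$ for $i\in[n]$; $\mathbf{g}_t=\beta_t(\mathbf{g}_{t-1}-A^{\top}\mathbf{q}_t)$. (Game dynamics.) $g(\mathbf{w},\mathbf{p})=\mathbf{p}^{\top}A\mathbf{w}-\tfrac12\|\mathbf{w}\|_2^2$, $\mathbf{p}_0=\tfrac{\mathbf{1}}{n}$, $h_j(\mathbf{w})=-g(\mathbf{w},\mathbf{p}_j)$, $\ell_j(\mathbf{p})=g(\mathbf{w}_j,\mathbf{p})$; for $t=1,\dots,T$: $\mathbf{w}_t=\arg\min_{\mathbf{w}\in\mathbb{R}^d}\sum_{j=1}^{t-1}\alpha_jh_j(\mathbf{w})+\alpha_th_{t-1}(\mathbf{w})$,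 then $\mathbf{p}_t=\arg\min_{\mathbf{p}\in\Delta^n}\tfrac14\sum_{s=1}^t\alpha_s\ell_s(\mathbf{p})+D_E(\mathbf{p},\tfrac{\mathbf{1}}{n})$; $\overline{\mathbf{w}}_T=\frac{\sum_{t=1}^T\alpha_t\mathbf{w}_t}{\sum_{t=1}^T\alpha_t}$. Then $\mathbf{q}_T=\mathbf{p}_T$ and $\mathbf{v}_T=\tfrac14\sum_{t=1}^T\alpha_t\mathbf{w}_t=\tfrac14\big(\sum_{t=1}^T\alpha_t\big)\overline{\mathbf{w}}_T$.
   Context: $\Delta^n$ is the probability simplex in $\mathbb{R}^n$; $\mathbf{1}$ the all-ones vector; $D_E(\mathbf{p},\mathbf{q})=\sum_ip_i\log(p_i/q_i)$ (KL divergence, the Bregman divergence of negative entropy). *)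

(* Defs.v *)
From HB Require Import structures.
From mathcomp Require Import all_boot all_order all_algebra.
From mathcomp Require Import all_classical all_reals all_analysis.
Set Implicit Arguments. Unset Strict Implicit. Unset Printing Implicit Defensive.
Import Order.TTheory GRing.Theory Num.Theory.
Local Open Scope ring_scope.

Section Defs.
Variables (R : realType) (n d : nat).

Definition datamx (x : 'I_n -> 'cV[R]_d) (y : 'I_n -> R) : 'M[R]_(n, d) :=
  \matrix_(i, k) (y i * x i k ord0).

Definition dotv (m : nat) (u v : 'cV[R]_m) : R := \sum_(k < m) u k ord0 * v k ord0.
Definition sqnorm (m : nat) (u : 'cV[R]_m) : R := \sum_(k < m) u k ord0 ^+ 2.

Definition alpha (t : nat) : R := t%:R.

Definition unif : 'cV[R]_n := const_mx (n%:R)^-1.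

Definition in_simplex (p : 'cV[R]_n) : Prop :=
  (forall i, 0 <= p i ord0) /\ \sum_(i < n) p i ord0 = 1.

Definition KL (p q : 'cV[R]_n) : R := \sum_(i < n) p i ord0 * ln (p i ord0 / q i ord0).

Definition softmax (x : 'I_n -> 'cV[R]_d) (y : 'I_n -> R) (v : 'cV[R]_d) : 'cV[R]_n :=
  \col_i (expR (- (y i * dotv v (x i))) /
          \sum_(j < n) expR (- (y j * dotv v (x j)))).

Fixpoint accel (x : 'I_n -> 'cV[R]_d) (y : 'I_n -> R) (t : nat)
  : 'cV[R]_d * 'cV[R]_d * 'cV[R]_n :=
  match t with
  | 0 => (0, 0, unif)
  | t'.+1 =>
      let: (v, g, q) := accel x y t' in
      let theta : R := t'.+1%:R / (2 * t'.+2%:R) in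
      let beta : R := t'.+1%:R / t'.+2%:R in
      let A := datamx x y in
      let v' := v - theta *: (g - A^T *m q) in
      let q' := softmax x y v' in
      let g' := beta *: (g - A^T *m q') in
      (v', g', q')
  end.

Definition accel_v x y t := (accel x y t).1.1.
Definition accel_q x y t := (accel x y t).2.

Definition gpay (A : 'M[R]_(n, d)) (w : 'cV[R]_d) (p : 'cV[R]_n) : R :=
  (p^T *m A *m w) ord0 ord0 - 2^-1 * sqnorm w.

Definition wobj (A : 'M[R]_(n, d)) (p : nat -> 'cV[R]_n) (t : nat) (w : 'cV[R]_d) : R :=
  \sum_(1 <= j < t) alpha j * (- gpay A w (p j)) + alpha t * (- gpay A w (p t.-1)).

Definition pobj (A : 'M[R]_(n, d)) (w : nat -> 'cV[R]_d) (t : nat) (p : 'cV[R]_n) : R :=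
  4^-1 * (\sum_(1 <= s < t.+1) alpha s * gpay A (w s) p) + KL p unif.

Definition wbar (w : nat -> 'cV[R]_d) (T : nat) : 'cV[R]_d :=
  (\sum_(1 <= t < T.+1) alpha t)^-1 *: \sum_(1 <= t < T.+1) alpha t *: w t.

End Defs.

(* Main.v *)
Require Import Defs.
From HB Require Import structures.
From mathcomp Require Import all_boot all_order all_algebra.
From mathcomp Require Import all_classical all_reals all_analysis.
From mathcomp Require Import ring lra.
Import Order.TTheory GRing.Theory Num.Theory.
Set Implicit Arguments. Unset Strict Implicit. Unset Printing Implicit Defensive.
Local Open Scope ring_scope.


Section H.
Variable R : realType.

Lemma dotvDl m (u v w : 'cV[R]_m) : dotv (u + v) w = dotv u w + dotv v w.
Proof. by rewrite /dotv -big_split; apply: eq_bigr => k _; rewrite !mxE mulrDl. Qed.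

Lemma dotvZl m a (u w : 'cV[R]_m) : dotv (a *: u) w = a * dotv u w.
Proof. by rewrite /dotv mulr_sumr; apply: eq_bigr => k _; rewrite !mxE mulrA. Qed.

Lemma dotv0l m (w : 'cV[R]_m) : dotv 0 w = 0.
Proof. by rewrite /dotv big1 // => k _; rewrite mxE mul0r. Qed.

Lemma dotv_suml m (w : 'cV[R]_m) (I : Type) (r : seq I) (P : pred I) (F : I -> 'cV[R]_m) :
  dotv (\sum_(j <- r | P j) F j) w = \sum_(j <- r | P j) dotv (F j) w.
Proof.
apply: (big_morph (fun u => dotv u w)); [move=> a b; exact: dotvDl | exact: dotv0l].
Qed.

Lemma sqnormB m (u v : 'cV[R]_m) : sqnorm (u - v) = sqnorm u - 2 * dotv v u + sqnorm v.
Proof.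
rewrite /sqnorm /dotv mulr_sumr -sumrB -big_split /=; apply: eq_bigr => k _.
rewrite !mxE; ring.
Qed.

Lemma sqnorm_le0 m (u : 'cV[R]_m) : sqnorm u <= 0 -> u = 0.
Proof.
move=> h.
have h0 : sqnorm u = 0.
  by apply/eqP; rewrite eq_le h /sqnorm sumr_ge0 // => k _; rewrite sqr_ge0.
apply/matrixP => i j; rewrite (ord1 j) mxE.
have := @psumr_eq0P _ _ predT (fun k => u k ord0 ^+ 2) (fun k _ => sqr_ge0 _) h0 i isT.
by move/eqP; rewrite sqrf_eq0 => /eqP.
Qed.

Lemma quad_min m (S : R) (b w0 : 'cV[R]_m) : 0 < S ->
  (forall w', S * 2^-1 * sqnorm w0 - dotv b w0 <= S * 2^-1 * sqnorm w' - dotv b w') ->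
  w0 = S^-1 *: b.
Proof.
move=> S0 h.
have hb : b = S *: (S^-1 *: b) by rewrite scalerA mulfV ?gt_eqF // scale1r.
move: (S^-1 *: b) hb => mm hb; rewrite hb in h *.
have := h mm; rewrite !dotvZl => h2.
have : sqnorm (w0 - mm) <= 0.
  rewrite sqnormB.
  have e : dotv mm mm = sqnorm mm by rewrite /dotv /sqnorm; apply: eq_bigr => k _; rewrite expr2.
  rewrite e in h2.
  have : S * (sqnorm w0 - 2 * dotv mm w0 + sqnorm mm) <= 0 by lra.
  by rewrite pmulr_rle0.
by move/sqnorm_le0/eqP; rewrite subr_eq0 => /eqP.
Qed.

Lemma ln_le_sub1 (r : R) : 0 < r -> ln r <= r - 1.
Proof. move=> r0; have := expR_ge1Dx (ln r); rewrite lnK ?posrE //; lra. Qed.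

Lemma ln_lt_sub1 (r : R) : 0 < r -> r != 1 -> ln r < r - 1.
Proof.
move=> r0 r1; have : ln r != 0 by rewrite ln_eq0.
move/expR_gt1Dx; rewrite lnK ?posrE //; lra.
Qed.

Lemma gibbs_term (a b : R) : 0 <= a -> 0 < b -> 0 <= a * ln (a / b) - a + b.
Proof.
move=> a0 b0; have [->|ap] := eqVneq a 0; first by rewrite mul0r; lra.
have ap' : 0 < a by rewrite lt_def ap.
have r0 : 0 < b / a by rewrite divr_gt0.
have e : ln (a / b) = - ln (b / a).
  by rewrite -lnV ?posrE // invf_div.
rewrite e; have := @ln_le_sub1 _ r0.
have -> : a * - ln (b / a) - a + b = a * ((b / a - 1) - ln (b / a)).
  by field; rewrite gt_eqF.
move=> h; apply: mulr_ge0; lra.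
Qed.

Lemma gibbs_term_eq (a b : R) : 0 <= a -> 0 < b -> a * ln (a / b) - a + b <= 0 -> a = b.
Proof.
move=> a0 b0; have [->|ap] := eqVneq a 0; first by rewrite mul0r; lra.
have ap' : 0 < a by rewrite lt_def ap.
have r0 : 0 < b / a by rewrite divr_gt0.
have e : ln (a / b) = - ln (b / a).
  by rewrite -lnV ?posrE // invf_div.
rewrite e.
have -> : a * - ln (b / a) - a + b = a * ((b / a - 1) - ln (b / a)).
  by field; rewrite gt_eqF.
have [r1|r1] := eqVneq (b / a) 1.
  move=> _; have : b = (b / a) * a by rewrite divfK ?gt_eqF.
  by rewrite r1 mul1r.
have := @ln_lt_sub1 _ r0 r1 => h1 h2.
have : 0 < a * ((b / a - 1) - ln (b / a)) by apply: mulr_gt0; lra.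
lra.
Qed.

End H.


Section H2.
Variables (R : realType) (n d : nat) (x : 'I_n -> 'cV[R]_d) (y : 'I_n -> R).

Lemma gpay_dot (A : 'M[R]_(n, d)) w p :
  gpay A w p = dotv (A^T *m p) w - 2^-1 * sqnorm w.
Proof.
rewrite /gpay /dotv; congr (_ - _); rewrite mxE; apply: eq_bigr => k _.
rewrite !mxE; congr (_ * _); apply: eq_bigr => i _; by rewrite !mxE mulrC.
Qed.

Lemma gpay_data w (p : 'cV[R]_n) :
  (p^T *m datamx x y *m w) ord0 ord0 = \sum_i p i ord0 * (y i * dotv w (x i)).
Proof.
rewrite -mulmxA mxE; apply: eq_bigr => i _; rewrite !mxE; congr (_ * _).
rewrite /dotv mulr_sumr; apply: eq_bigr => k _; rewrite !mxE; ring.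
Qed.

Definition Vof (w : nat -> 'cV[R]_d) t := 4^-1 *: \sum_(1 <= s < t.+1) alpha R s *: w s.

Lemma pobj_eq w t (p : 'cV[R]_n) :
  pobj (datamx x y) w t p =
  \sum_i p i ord0 * (y i * dotv (Vof w t) (x i) + ln (p i ord0 / (n%:R)^-1))
  - 4^-1 * \sum_(1 <= s < t.+1) alpha R s * (2^-1 * sqnorm (w s)).
Proof.
rewrite /pobj /KL /gpay.
under eq_bigr => s _ do rewrite mulrBr gpay_data.
rewrite sumrB mulrBr.
have -> : 4^-1 * \sum_(1 <= s < t.+1) alpha R s * \sum_i p i ord0 * (y i * dotv (w s) (x i))
   = \sum_i p i ord0 * (y i * dotv (Vof w t) (x i)).
  rewrite /Vof; under [RHS]eq_bigr => i _ do rewrite dotvZl dotv_suml.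
  rewrite mulr_sumr.
  under [RHS]eq_bigr => i _ do rewrite !mulr_sumr.
  under [LHS]eq_bigr => s _ do rewrite mulrA mulr_sumr.
  rewrite [RHS]exchange_big /=; apply: eq_bigr => s _; apply: eq_bigr => i _.
  rewrite dotvZl. move: (dotv _ _) (p i ord0) (y i) (alpha R s) => D P Y Al; by field.
rewrite addrAC; congr (_ - _); rewrite -big_split /=.
by apply: eq_bigr => i _; rewrite mxE mulrDr.
Qed.

End H2.

Section H3.
Variables (R : realType) (n d : nat) (x : 'I_n -> 'cV[R]_d) (y : 'I_n -> R).

Lemma softmax_min (V : 'cV[R]_d) (K : R) (f : 'cV[R]_n -> R) (p0 : 'cV[R]_n) :
  (0 < n)%N ->
  (forall p, in_simplex p -> f p =
     \sum_i p i ord0 * (y i * dotv V (x i) + ln (p i ord0 / (n%:R)^-1)) - K) ->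
  in_simplex p0 -> (forall p', in_simplex p' -> f p0 <= f p') ->
  p0 = softmax x y V.
Proof.
move=> n0 hf hp0 hmin.
pose c i := y i * dotv V (x i).
pose Z := \sum_j expR (- c j).
have Z0 : 0 < Z.
  rewrite /Z (bigD1 (Ordinal n0)) //=.
  by apply: ltr_pwDl; [exact: expR_gt0 | apply: sumr_ge0 => j _; exact: expR_ge0].
set q := softmax x y V.
have hq i : q i ord0 = expR (- c i) / Z by rewrite /q /softmax mxE.
have q0 i : 0 < q i ord0 by rewrite hq divr_gt0 // expR_gt0.
have qs : in_simplex q.
  split; first by move=> i; exact: ltW.
  under eq_bigr => i _ do rewrite hq.
  by rewrite -mulr_suml mulfV // gt_eqF.
have n0' : (0 : R) < n%:R by rewrite ltr0n.
pose L := ln (n%:R : R) - ln Z.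
have term (a : R) i : 0 <= a ->
    a * (c i + ln (a / (n%:R)^-1)) = a * ln (a / q i ord0) + a * L.
  move=> a0; have [->|ap] := eqVneq a 0; first by rewrite !mul0r addr0.
  have ap' : 0 < a by rewrite lt_def ap a0.
  rewrite ln_div ?posrE ?invr_gt0 // lnV ?posrE //.
  rewrite ln_div ?posrE // hq ln_div ?posrE ?expR_gt0 // expRK /L -mulrDr; congr (_ * _); lra.
have key p : in_simplex p ->
    f p = \sum_i (p i ord0 * ln (p i ord0 / q i ord0) - p i ord0 + q i ord0) + (L - K).
  move=> [pge psum]; rewrite hf //.
  under eq_bigr => i _ do rewrite (term _ i (pge i)).
  rewrite big_split /= -mulr_suml psum !big_split /= sumrN psum qs.2; ring.
have hq1 : f q = L - K.
  rewrite key // big1 ?add0r // => i _.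
  by rewrite divff ?gt_eqF // ln1 mulr0 sub0r addNr.
have := hmin q qs; rewrite hq1 key // => hle.
have hs : \sum_i (p0 i ord0 * ln (p0 i ord0 / q i ord0) - p0 i ord0 + q i ord0) = 0.
  apply/eqP; rewrite eq_le; apply/andP; split; first by lra.
  by apply: sumr_ge0 => i _; apply: gibbs_term => //; exact: hp0.1.
have hge : forall k, predT k -> 0 <= p0 k ord0 * ln (p0 k ord0 / q k ord0) - p0 k ord0 + q k ord0.
  by move=> k _; apply: gibbs_term => //; exact: hp0.1.
apply/matrixP => i j; rewrite (ord1 j).
apply: gibbs_term_eq; [exact: hp0.1 | exact: q0 |].
by rewrite (psumr_eq0P hge hs).
Qed.
End H3.

Section H4.
Variables (R : realType) (n d : nat) (x : 'I_n -> 'cV[R]_d) (y : 'I_n -> R).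

Lemma sum_alpha m : \sum_(1 <= j < m.+1) alpha R j = m%:R * (m%:R + 1) / 2.
Proof.
elim: m => [|m IH]; first by rewrite big_geq // mul0r mul0r.
rewrite big_nat_recr //= IH /alpha -natr1; by field.
Qed.

Lemma wobj_eq (A : 'M[R]_(n, d)) p t w :
  wobj A p t.+1 w = (\sum_(1 <= j < t.+2) alpha R j) * 2^-1 * sqnorm w
   - dotv (\sum_(1 <= j < t.+1) alpha R j *: (A^T *m p j) + alpha R t.+1 *: (A^T *m p t)) w.
Proof.
rewrite /wobj /= dotvDl dotv_suml dotvZl (big_nat_recr t.+1) //=.
under eq_bigr => j _ do rewrite gpay_dot.
under [X in _ = _ - (X + _)]eq_bigr => j _ do rewrite dotvZl.
rewrite gpay_dot.
have -> : \sum_(1 <= j < t.+1) alpha R j * - (dotv (A^T *m p j) w - 2^-1 * sqnorm w)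
   = (\sum_(1 <= j < t.+1) alpha R j) * (2^-1 * sqnorm w) - \sum_(1 <= j < t.+1) alpha R j * dotv (A^T *m p j) w.
  rewrite mulr_suml -sumrB; apply: eq_bigr => j _.
  have e : forall (Al D Q : R), Al * - (D - 2^-1 * Q) = Al * (2^-1 * Q) - Al * D by move=> *; field.
  exact: e.
have e : forall (S1 Q D1 Al D : R), S1 * (2^-1 * Q) - D1 + Al * - (D - 2^-1 * Q) = (S1 + Al) / 2 * Q - (D1 + Al * D) by move=> *; field.
exact: e.
Qed.

End H4.


Section H5.
Variables (R : realType) (n d : nat) (x : 'I_n -> 'cV[R]_d) (y : 'I_n -> R)
  (T : nat) (w : nat -> 'cV[R]_d) (p : nat -> 'cV[R]_n).

Definition Gof t : 'cV[R]_d :=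
  - (t.+1%:R)^-1 *: \sum_(1 <= j < t.+1) alpha R j *: ((datamx x y)^T *m p j).

Lemma main_ind :
  (0 < n)%N ->
  p 0%N = unif R n ->
  (forall t, (1 <= t <= T)%N ->
     forall w', wobj (datamx x y) p t (w t) <= wobj (datamx x y) p t w') ->
  (forall t, (1 <= t <= T)%N ->
     in_simplex (p t) /\
     forall p', in_simplex p' -> pobj (datamx x y) w t (p t) <= pobj (datamx x y) w t p') ->
  forall t, (t <= T)%N -> accel x y t = (Vof w t, Gof t, p t).
Proof.
move=> n0 hp0 hw hp; elim=> [|t IH] Ht.
  by rewrite /= /Vof /Gof !big_geq // !scaler0 hp0.
have Ht' : (1 <= t.+1 <= T)%N by rewrite Ht.
rewrite /= IH ?(ltnW Ht) //.
set A := datamx x y.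
have ht : (0 : R) <= t%:R by rewrite ler0n.
have wt : w t.+1 = (\sum_(1 <= j < t.+2) alpha R j)^-1 *:
   (\sum_(1 <= j < t.+1) alpha R j *: (A^T *m p j) + alpha R t.+1 *: (A^T *m p t)).
  apply: quad_min.
    by rewrite sum_alpha; apply: divr_gt0 => //; apply: mulr_gt0; rewrite -?natr1; lra.
  by move=> w'; have := hw _ Ht' w'; rewrite !wobj_eq.
have hv : Vof w t - (t.+1%:R / (2 * t.+2%:R)) *: (Gof t - A^T *m p t) = Vof w t.+1.
  rewrite /Vof (big_nat_recr t.+1) //= wt sum_alpha /Gof.
  move: (\sum_(1 <= s < t.+1) alpha R s *: w s) => SW.
  move: (\sum_(1 <= j < t.+1) alpha R j *: (A^T *m p j)) => B.
  apply/matrixP => i j; rewrite !mxE /alpha -!natr1.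
  move: (SW i j) (B i j) ((A^T *m p t) i j) => a b c.
  by field; rewrite !natr1 !pnatr_eq0.
rewrite hv.
have hq : softmax x y (Vof w t.+1) = p t.+1.
  have [hs hmin] := hp _ Ht'.
  symmetry; apply: (softmax_min (K := 4^-1 * \sum_(1 <= s < t.+2) alpha R s * (2^-1 * sqnorm (w s)))
     (f := pobj A w t.+1)) => //.
  by move=> q _; rewrite pobj_eq.
rewrite hq; congr (_, _, _).
rewrite /Gof (big_nat_recr t.+1) //=.
move: (\sum_(1 <= j < t.+1) alpha R j *: (A^T *m p j)) => B.
apply/matrixP => i j; rewrite !mxE /alpha -!natr1.
move: (B i j) ((A^T *m p t.+1) i j) => b c.
by field; rewrite ?natr1 ?pnatr_eq0.
Qed.
End H5.


Theorem proposition2 (R : realType) (n d : nat) (x : 'I_n -> 'cV[R]_d) (y : 'I_n -> R)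
  (T : nat) (w : nat -> 'cV[R]_d) (p : nat -> 'cV[R]_n) :
  (0 < n)%N ->
  (forall i, y i = 1 \/ y i = -1) ->
  p 0%N = unif R n ->
  (forall t, (1 <= t <= T)%N ->
     forall w', wobj (datamx x y) p t (w t) <= wobj (datamx x y) p t w') ->
  (forall t, (1 <= t <= T)%N ->
     in_simplex (p t) /\
     forall p', in_simplex p' -> pobj (datamx x y) w t (p t) <= pobj (datamx x y) w t p') ->
  accel_q x y T = p T /\
  accel_v x y T = 4^-1 *: \sum_(1 <= t < T.+1) alpha R t *: w t /\
  accel_v x y T = (4^-1 * \sum_(1 <= t < T.+1) alpha R t) *: wbar w T.
Proof.
move=> n0 _ hp0 hw hp.
have := main_ind n0 hp0 hw hp (leqnn T).
rewrite /accel_q /accel_v => -> /=.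
split; first by [].
split; first by [].
rewrite /wbar /Vof; case: T {hw hp} => [|T].
  by rewrite !big_geq // !scaler0.
rewrite scalerA -mulrA mulfV ?mulr1 // sum_alpha.
by rewrite mulf_neq0 ?invr_eq0 // mulf_neq0 // natr1 pnatr_eq0.
Qed.
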